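(* Let $k_{\mathcal{A}},k_{\mathcal{W}},k_{\mathcal{Y}}$ be bounded positive semidefinite kernels on $\mathcal{A},\mathcal{W},\mathcal{Y}$ with RKHSs $\mathcal{H}_{\mathcal{A}},\mathcal{H}_{\mathcal{W}},\mathcal{H}_{\mathcal{Y}}$ and canonical features $\phi_{\mathcal{A}},\phi_{\mathcal{W}},\phi_{\mathcal{Y}}$. Let $\mathcal{H}_{\mathcal{A}\mathcal{W}}$ and $\mathcal{H}_{\mathcal{A}\mathcal{Y}}$ be the tensor-product RKHSs with features $\phi_{\mathcal{A}}(a)\otimes\phi_{\mathcal{W}}(w)$ and $\phi_{\mathcal{A}\mathcal{Y}}(a,y)=\phi_{\mathcal{A}}(a)\otimes\phi_{\mathcal{Y}}(y)$, and let $\mathcal{H}_{\mathcal{W}(\mathcal{A}\mathcal{Y})}$ be the space of Hilbert–Schmidt operators $\mathcal{H}_{\mathcal{A}\mathcal{Y}}\to\mathcal{H}_{\mathcal{W}}$. Given stage 1 samples $\{(w_i,a_i,y_i)\}_{i=1}^n$, stage 2 samples $\{(\dot a_i,\dot y_i)\}_{i=1}^m$ and regularization parameters $\lambda,\eta>0$, define $$\hat C_{W|A,Y}=\arg\min_{C\in\mathcal{H}_{\mathcal{W}(\mathcal{A}\mathcal{Y})}}\frac1n\sum_{i=1}^n\|\phi_{\mathcal{W}}(w_i)-C\,\phi_{\mathcal{A}\mathcal{Y}}(a_i,y_i)\|^2_{\mathcal{H}_{\mathcal{W}}}+\lambda\|C\|^2_{\mathcal{H}_{\mathcal{W}(\mathcal{A}\mathcal{Y})}},$$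 $$\hat h=\arg\min_{h\in\mathcal{H}_{\mathcal{A}\mathcal{W}}}\frac1m\sum_{i=1}^m\Big(\dot y_i-\big\langle h,\ \phi_{\mathcal{A}}(\dot a_i)\otimes\hat C_{W|A,Y}\phi_{\mathcal{A}\mathcal{Y}}(\dot a_i,\dot y_i)\big\rangle_{\mathcal{H}_{\mathcal{A}\mathcal{W}}}\Big)^2+\eta\|h\|^2_{\mathcal{H}_{\mathcal{A}\mathcal{W}}}.$$ Then $$\hat h(a,w)=\vec\alpha^\top\vec k(a,w),\qquad \vec\alpha=(M+m\eta I)^{-1}\dot{\vec y},$$ where $\dot{\vec y}=(\dot y_1,\dots,\dot y_m)^\top\in\mathbb{R}^m$, $$M=K_{\dot A\dot A}\odot(B^\top K_{WW}B)\in\mathbb{R}^{m\times m},\quad \vec k(a,w)=\vec k_{\dot A}(a)\odot(B^\top\vec k_W(w))\in\mathbb{R}^m,\quad B=(K_{AA}\odot K_{YY}+n\lambda I)^{-1}(K_{A\dot A}\odot K_{Y\dot Y})\in\mathbb{R}^{n\times m}.$$ Here $K_{AA},K_{WW},K_{YY}\in\mathbb{R}^{n\times n}$ are the stage 1 kernel matrices (e.g. $(K_{AA})_{ij}=k_{\mathcal{A}}(a_i,a_j)$), $K_{\dot A\dot A}=(k_{\mathcal{A}}(\dot a_i,\dot a_j))_{ij}\in\mathbb{R}^{m\times m}$, $K_{A\dot A}=(k_{\mathcal{A}}(a_i,\dot a_j))_{ij}$, $K_{Y\dot Y}=(k_{\mathcal{Y}}(y_i,\dot y_j))_{ij}\in\mathbb{R}^{n\times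 m}$, $\vec k_{\dot A}(a)=(k_{\mathcal{A}}(\dot a_i,a))_{i=1}^m\in\mathbb{R}^m$, and $\vec k_W(w)=(k_{\mathcal{W}}(w_i,w))_{i=1}^n\in\mathbb{R}^n$.
   Context: $\odot$ denotes the entrywise (Hadamard) product; $\otimes$ the tensor product of RKHS elements. *)

(* Defs.v *)
From HB Require Import structures.
From mathcomp Require Import all_boot all_order all_algebra.
From mathcomp Require Import reals.
Set Implicit Arguments. Unset Strict Implicit. Unset Printing Implicit Defensive.
Import Order.TTheory GRing.Theory Num.Theory.
Local Open Scope ring_scope.

HB.mixin Record Lmodule_hasInner (R : realType) V of GRing.Lmodule R V := {
  inner : V -> V -> R;
  innerC : forall x y, inner x y = inner y x;
  innerDl : forall x y z, inner (x + y) z = inner x z + inner y z;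
  innerZl : forall (c : R) x y, inner (c *: x) y = c * inner x y;
  inner_ge0 : forall x, 0 <= inner x x;
  inner_eq0 : forall x, inner x x = 0 -> x = 0 }.

#[short(type="preHilbertType")]
HB.structure Definition PreHilbert (R : realType) :=
  { V of Lmodule_hasInner R V & GRing.Lmodule R V }.

Section Defs.
Context {R : realType}.

Definition nsq {V : preHilbertType R} (x : V) : R := inner x x.

Definition hilbert_complete (V : preHilbertType R) : Prop :=
  forall u : nat -> V,
    (forall e : R, 0 < e -> exists N : nat, forall p q : nat,
        (N <= p)%N -> (N <= q)%N -> nsq (u p - u q) < e) ->
    exists l : V, forall e : R, 0 < e -> exists N : nat, forall p : nat,
        (N <= p)%N -> nsq (u p - l) < e.

Definition dense_span (V : preHilbertType R) (S : V -> Prop) : Prop :=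
  forall (x : V) (e : R), 0 < e ->
    exists (k : nat) (c : 'I_k -> R) (s : 'I_k -> V),
      (forall i, S (s i)) /\ nsq (x - \sum_(i < k) c i *: s i) < e.

(* k is a bounded kernel whose RKHS is (isometrically) the Hilbert space H
   with canonical feature map phi: H complete, span of features dense,
   and k x x' = <phi x, phi x'> (reproducing property). *)
Definition rkhs_of (X : Type) (k : X -> X -> R) (H : preHilbertType R)
    (phi : X -> H) : Prop :=
  [/\ hilbert_complete H,
      dense_span (fun h => exists x, h = phi x),
      (forall x x', k x x' = inner (phi x) (phi x')) &
      (exists c : R, forall x, k x x <= c)].

Definition is_tensor_product (H1 H2 T : preHilbertType R)
    (t : H1 -> H2 -> T) : Prop :=
  [/\ hilbert_complete T,
      dense_span (fun z => exists x y, z = t x y) &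
      (forall x x' y y', inner (t x y) (t x' y') = inner x x' * inner y y')].

(* S with app is the Hilbert space of Hilbert-Schmidt operators H1 -> H2:
   S is the Hilbert tensor product H2 (x) H1 via the rank-one operators
   rk w v = (u |-> <v,u> w), app C is the action of C, and
   <C v, w> = <C, rk w v>_HS. *)
Definition is_HS_space (H1 H2 S : preHilbertType R)
    (rk : H2 -> H1 -> S) (app : S -> H1 -> H2) : Prop :=
  [/\ is_tensor_product rk,
      (forall w v u, app (rk w v) u = inner v u *: w) &
      (forall C v w, inner (app C v) w = inner C (rk w v))].

Definition hadamard (p q : nat) (X Y : 'M[R]_(p, q)) : 'M[R]_(p, q) :=
  \matrix_(i, j) (X i j * Y i j).

End Defs.

(* Main.v *)
Require Import Defs.
From HB Require Import structures.
From mathcomp Require Import all_boot all_order all_algebra.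
From mathcomp Require Import reals.
From mathcomp Require Import ring lra.
Import Order.TTheory GRing.Theory Num.Theory.
Local Open Scope ring_scope.

Section Inner.
Context {R : realType} {V : preHilbertType R}.
Implicit Types x y z : V.

Lemma inner0l y : inner (0 : V) y = 0.
Proof. by have := innerZl 0 (0 : V) y; rewrite scale0r mul0r. Qed.
Lemma innerNl x y : inner (- x) y = - inner x y.
Proof. by rewrite -scaleN1r innerZl mulN1r. Qed.
Lemma innerBl x y z : inner (x - y) z = inner x z - inner y z.
Proof. by rewrite innerDl innerNl. Qed.
Lemma innerDr x y z : inner x (y + z) = inner x y + inner x z.
Proof. by rewrite innerC innerDl !(innerC x). Qed.
Lemma innerZr (c : R) x y : inner x (c *: y) = c * inner x y.
Proof. by rewrite innerC innerZl innerC. Qed.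
Lemma inner0r y : inner y (0 : V) = 0.
Proof. by rewrite innerC inner0l. Qed.
Lemma inner_suml (I : Type) (r : seq I) (P : pred I) (F : I -> V) y :
  inner (\sum_(i <- r | P i) F i) y = \sum_(i <- r | P i) inner (F i) y.
Proof. exact: (big_morph (fun x => inner x y) (fun a b => innerDl a b y) (inner0l y)). Qed.
Lemma inner_sumr (I : Type) (r : seq I) (P : pred I) (F : I -> V) y :
  inner y (\sum_(i <- r | P i) F i) = \sum_(i <- r | P i) inner y (F i).
Proof. rewrite innerC inner_suml; apply: eq_bigr => i _; exact: innerC. Qed.
Lemma inner_ext x y : (forall z, inner x z = inner y z) -> x = y.
Proof.
move=> h; apply/eqP; rewrite -subr_eq0; apply/eqP/inner_eq0.
by rewrite innerBl h subrr.
Qed.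
Lemma nsqD x y : nsq (x + y) = nsq x + 2 * inner x y + nsq y.
Proof. rewrite /nsq innerDl !innerDr (innerC y x); ring. Qed.
Lemma nsqB x y : nsq (x - y) = nsq x - 2 * inner x y + nsq y.
Proof.
have hN : inner x (- y) = - inner x y by rewrite innerC innerNl innerC.
have hN2 : nsq (- y) = nsq y by rewrite /nsq innerNl innerC innerNl opprK.
by rewrite nsqD hN hN2 mulrN.
Qed.
Lemma nsq_ge0 x : 0 <= nsq x. Proof. exact: inner_ge0. Qed.

Lemma min_unique (f : V -> R) (v : V) (c : R) : 0 < c ->
  (forall d, f v + c * nsq d <= f (v + d)) ->
  (forall u, f v <= f u) /\ (forall u, (forall u', f u <= f u') -> u = v).
Proof.
move=> hc h; split.
  move=> u; have E : v + (u - v) = u by rewrite addrC subrK.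
  have := h (u - v); rewrite E => H.
  have := nsq_ge0 (u - v); nra.
move=> u hu; have E : v + (u - v) = u by rewrite addrC subrK.
  have := h (u - v); rewrite E => H.
have := hu v => H2.
have H3 : nsq (u - v) = 0.
  apply/eqP; rewrite eq_le nsq_ge0 andbT; nra.
by apply/eqP; rewrite -subr_eq0; apply/eqP/inner_eq0.
Qed.
End Inner.

Section Stage1.
Context {R : realType} {HW HAY HS : preHilbertType R}
  (rk : HW -> HAY -> HS) (app : HS -> HAY -> HW).
Hypothesis happ : forall C v w, inner (app C v) w = inner C (rk w v).
Hypothesis hrk : forall w v u, app (rk w v) u = inner v u *: w.

Lemma appD C D v : app (C + D) v = app C v + app D v.
Proof. by apply: inner_ext => z; rewrite innerDl !happ innerDl. Qed.
Lemma app0 v : app 0 v = 0.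
Proof. by apply: inner_ext => z; rewrite happ !inner0l. Qed.
Lemma app_sum (I : Type) (r : seq I) (P : pred I) (F : I -> HS) v :
  app (\sum_(i <- r | P i) F i) v = \sum_(i <- r | P i) app (F i) v.
Proof. exact: (big_morph (fun C => app C v) (fun a b => appD a b v) (app0 v)). Qed.

Lemma stage1 n (x : 'I_n -> HAY) (phi g : 'I_n -> HW) (lam : R) :
  (forall k, phi k = \sum_(j < n) inner (x j) (x k) *: g j + (n%:R * lam) *: g k) ->
  forall C, C = \sum_(j < n) rk (g j) (x j) -> forall D,
   n%:R^-1 * \sum_(i < n) nsq (phi i - app C (x i)) + lam * nsq C + lam * nsq D
   <= n%:R^-1 * \sum_(i < n) nsq (phi i - app (C + D) (x i)) + lam * nsq (C + D).
Proof.
move=> hphi C hC D.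
have hr k : phi k - app C (x k) = (n%:R * lam) *: g k.
  rewrite hC app_sum; under eq_bigr do rewrite hrk.
  by rewrite hphi addrC addKr.
have E k : nsq (phi k - app (C+D) (x k)) = nsq (phi k - app C (x k))
    - 2 * inner (phi k - app C (x k)) (app D (x k)) + nsq (app D (x k)).
  by rewrite appD opprD addrA [in LHS]nsqB.
rewrite (eq_bigr _ (fun k _ => E k)).
rewrite big_split /= sumrB.
have S : \sum_(k < n) 2 * inner (phi k - app C (x k)) (app D (x k))
     = 2 * (n%:R * lam) * inner C D.
  rewrite -mulrA -mulr_sumr; congr (_ * _).
  rewrite (innerC C D) hC inner_sumr mulr_sumr; apply: eq_bigr => k _.
  by rewrite -hC hr innerZl innerC happ.
have key : n%:R^-1 * (2 * (n%:R * lam) * inner C D) = 2 * lam * inner C D.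
  have [n0|nn0] := eqVneq n 0%N.
    have -> : inner C D = 0.
      rewrite hC; move: (x) (g); rewrite n0 => x' g'.
      by rewrite big_ord0 inner0l.
    by rewrite !mulr0.
  have nz : (n%:R : R) != 0 by rewrite pnatr_eq0.
  by field.
have T : 0 <= n%:R^-1 * \sum_(i < n) nsq (app D (x i)).
  by rewrite mulr_ge0 ?invr_ge0 ?ler0n // sumr_ge0 // => i _; apply: nsq_ge0.
rewrite S mulrDr mulrBr key nsqD.
lra.
Qed.
End Stage1.

Section Stage2.
Context {R : realType} {V : preHilbertType R}.

Lemma stage2 m (z : 'I_m -> V) (yd al : 'I_m -> R) (eta : R) :
  (forall k, yd k = \sum_(j < m) inner (z j) (z k) * al j + (m%:R * eta) * al k) ->
  forall h, h = \sum_(j < m) al j *: z j -> forall d,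
  m%:R^-1 * \sum_(i < m) (yd i - inner h (z i)) ^+ 2 + eta * nsq h + eta * nsq d
  <= m%:R^-1 * \sum_(i < m) (yd i - inner (h + d) (z i)) ^+ 2 + eta * nsq (h + d).
Proof.
move=> hyd h hh d.
have hr k : yd k - inner h (z k) = (m%:R * eta) * al k.
  rewrite hh inner_suml; under eq_bigr do rewrite innerZl mulrC.
  by rewrite hyd addrC addKr.
have E k : (yd k - inner (h + d) (z k)) ^+ 2 = (yd k - inner h (z k)) ^+ 2
    - 2 * ((yd k - inner h (z k)) * inner d (z k)) + (inner d (z k)) ^+ 2.
  rewrite innerDl; ring.
rewrite (eq_bigr _ (fun k _ => E k)).
rewrite big_split /= sumrB.
have S : \sum_(k < m) 2 * ((yd k - inner h (z k)) * inner d (z k))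
     = 2 * (m%:R * eta) * inner h d.
  rewrite -mulrA -mulr_sumr; congr (_ * _).
  rewrite hh inner_suml mulr_sumr; apply: eq_bigr => k _.
  by rewrite -hh hr innerZl (innerC (z k)) mulrA.
have key : m%:R^-1 * (2 * (m%:R * eta) * inner h d) = 2 * eta * inner h d.
  have [n0|nn0] := eqVneq m 0%N.
    have -> : inner h d = 0.
      rewrite hh big1 ?inner0l // => -[i Hi]; exfalso; move: Hi; by rewrite n0.
    by rewrite !mulr0.
  have nz : (m%:R : R) != 0 by rewrite pnatr_eq0.
  by field.
have T : 0 <= m%:R^-1 * \sum_(i < m) (inner d (z i)) ^+ 2.
  by rewrite mulr_ge0 ?invr_ge0 ?ler0n // sumr_ge0 // => i _; apply: sqr_ge0.
rewrite S mulrDr mulrBr key nsqD.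
lra.
Qed.
End Stage2.

Lemma gram_unit {R : realType} {V : preHilbertType R} n (v : 'I_n -> V) (c : R)
  (Gm : 'M[R]_n) : (forall i j, Gm i j = inner (v i) (v j)) ->
  ((0 < n)%N -> 0 < c) -> Gm + c%:M \in unitmx.
Proof.
case: n v Gm => [|n] v Gm hG hc.
  by rewrite unitmxE det_mx00 unitr1.
have c0 : 0 < c by exact: hc.
rewrite -row_free_unit -kermx_eq0; apply/eqP/row_matrixP => i; rewrite row0.
set u := row i _.
have hu : u *m (Gm + c%:M) = 0 by rewrite /u -row_mul mulmx_ker row0.
have hu' : u *m Gm + c *: u = 0 by rewrite -mul_mx_scalar -mulmxDr.
have E j : (u *m Gm) 0 j + c * u 0 j = 0.
  by have := congr1 (fun M : 'rV[R]_n.+1 => M 0 j) hu'; rewrite !mxE.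
set s := \sum_(i < n.+1) u 0 i *: v i.
have Q : nsq s + c * \sum_(j < n.+1) u 0 j ^+ 2 = 0.
  have -> : nsq s = \sum_(j < n.+1) (u *m Gm) 0 j * u 0 j.
    rewrite /nsq {1}/s inner_suml.
    under eq_bigr do rewrite innerZl /s inner_sumr.
    under [RHS]eq_bigr do rewrite mxE.
    under [RHS]eq_bigr do rewrite mulr_suml.
    rewrite exchange_big /=; apply: eq_bigr => k _.
    rewrite mulr_sumr; apply: eq_bigr => j _.
    by rewrite innerZr hG; ring.
  rewrite mulr_sumr -big_split /=; apply: big1 => j _.
  have := E j; rewrite expr2; nra.
have S0 : \sum_(j < n.+1) u 0 j ^+ 2 = 0.
  have h1 := nsq_ge0 s.
  have h2 : 0 <= \sum_(j < n.+1) u 0 j ^+ 2 by apply: sumr_ge0 => j _; exact: sqr_ge0.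
  apply/eqP; rewrite eq_le h2 andbT; nra.
apply/rowP => j; rewrite mxE.
have /psumr_eq0P H : \sum_(j < n.+1) u 0 j ^+ 2 = 0 by [].
have := H (fun j _ => sqr_ge0 (u 0 j)) j isT.
move/eqP; rewrite sqrf_eq0 => /eqP; rewrite /u mxE => ->; by rewrite mxE.
Qed.
Theorem theorem2
  (R : realType) (A W : Type)
  (kA : A -> A -> R) (kW : W -> W -> R) (kY : R -> R -> R)
  (HA HW HY HAW HAY HS : preHilbertType R)
  (phiA : A -> HA) (phiW : W -> HW) (phiY : R -> HY)
  (tAW : HA -> HW -> HAW) (tAY : HA -> HY -> HAY)
  (rk : HW -> HAY -> HS) (app : HS -> HAY -> HW)
  (hA : rkhs_of kA phiA) (hW : rkhs_of kW phiW) (hY : rkhs_of kY phiY)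
  (hAW : is_tensor_product tAW) (hAY : is_tensor_product tAY)
  (hHS : is_HS_space rk app)
  (n m : nat) (w : 'I_n -> W) (a : 'I_n -> A) (y : 'I_n -> R)
  (ad : 'I_m -> A) (yd : 'I_m -> R) (lam eta : R)
  (hlam : 0 < lam) (heta : 0 < eta) :
  let phiAY := fun (a0 : A) (y0 : R) => tAY (phiA a0) (phiY y0) in
  let obj1 := fun C : HS =>
    n%:R^-1 * \sum_(i < n) nsq (phiW (w i) - app C (phiAY (a i) (y i)))
    + lam * nsq C in
  let obj2 := fun (C : HS) (h : HAW) =>
    m%:R^-1 * \sum_(i < m)
       (yd i - inner h (tAW (phiA (ad i)) (app C (phiAY (ad i) (yd i))))) ^+ 2
    + eta * nsq h in
  let KAA := \matrix_(i < n, j < n) kA (a i) (a j) in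
  let KWW := \matrix_(i < n, j < n) kW (w i) (w j) in
  let KYY := \matrix_(i < n, j < n) kY (y i) (y j) in
  let KAdAd := \matrix_(i < m, j < m) kA (ad i) (ad j) in
  let KAAd := \matrix_(i < n, j < m) kA (a i) (ad j) in
  let KYYd := \matrix_(i < n, j < m) kY (y i) (yd j) in
  let B := invmx (hadamard KAA KYY + (n%:R * lam)%:M) *m hadamard KAAd KYYd in
  let M := hadamard KAdAd (B^T *m KWW *m B) in
  let ydv := \col_(i < m) yd i in
  let alpha := invmx (M + (m%:R * eta)%:M) *m ydv in
  let kvec := fun (a0 : A) (w0 : W) =>
    hadamard (\col_(i < m) kA (ad i) a0)
             (B^T *m \col_(i < n) kW (w i) w0) in
  (exists C : HS, forall C' : HS, obj1 C <= obj1 C') /\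
  forall Chat : HS, (forall C' : HS, obj1 Chat <= obj1 C') ->
    (exists h : HAW, forall h' : HAW, obj2 Chat h <= obj2 Chat h') /\
    forall hhat : HAW, (forall h' : HAW, obj2 Chat hhat <= obj2 Chat h') ->
      forall (a0 : A) (w0 : W),
        inner hhat (tAW (phiA a0) (phiW w0)) = (alpha^T *m kvec a0 w0) 0 0.
Proof.
move=> phiAY obj1 obj2 KAA KWW KYY KAdAd KAAd KYYd B M ydv alpha kvec.
case: hHS => _ hrk happ.
case: hAW => _ _ tAWi. case: hAY => _ _ tAYi.
case: hA => _ _ kAi _. case: hW => _ _ kWi _. case: hY => _ _ kYi _.
pose x k := phiAY (a k) (y k).
pose xd k := phiAY (ad k) (yd k).
have hK i j : hadamard KAA KYY i j = inner (x i) (x j).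
  by rewrite !mxE /x /phiAY tAYi -kAi -kYi.
have hKd i j : hadamard KAAd KYYd i j = inner (x i) (xd j).
  by rewrite !mxE /x /xd /phiAY tAYi -kAi -kYi.
set Kc := hadamard KAA KYY + (n%:R * lam)%:M.
have Kcu : Kc \in unitmx.
  apply: (@gram_unit R HAY n x (n%:R * lam) _ hK) => n0; by rewrite mulr_gt0 // ltr0n.
set Gi := invmx Kc.
have GK : Gi *m Kc = 1%:M by rewrite mulVmx.
pose g j := \sum_(l < n) Gi l j *: phiW (w l).
have hyp1 k : phiW (w k) = \sum_(j < n) inner (x j) (x k) *: g j + (n%:R * lam) *: g k.
  have GK' l : (Gi *m hadamard KAA KYY) l k + (n%:R * lam) * Gi l k = (l == k)%:R.
    have := congr1 (fun Q : 'M[R]_n => Q l k) GK.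
    by rewrite /Kc mulmxDr mul_mx_scalar /= !mxE.
  have -> : \sum_(j < n) inner (x j) (x k) *: g j + (n%:R * lam) *: g k
      = \sum_(l < n) ((Gi *m hadamard KAA KYY) l k + (n%:R * lam) * Gi l k) *: phiW (w l).
    rewrite /g scaler_sumr.
    under eq_bigr do rewrite scaler_sumr.
    rewrite exchange_big -big_split /=; apply: eq_bigr => l _.
    rewrite mxE scalerDl scaler_suml; congr (_ + _); last by rewrite scalerA.
    by apply: eq_bigr => j _; rewrite scalerA hK mulrC.
  under eq_bigr do rewrite GK'.
  rewrite (bigD1 k) //= eqxx scale1r big1 ?addr0 // => l /negbTE ->.
  by rewrite scale0r.
pose Cs := \sum_(j < n) rk (g j) (x j).
have H1 : forall D, obj1 Cs + lam * nsq D <= obj1 (Cs + D).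
  move=> D; exact (@stage1 _ _ _ _ rk app happ hrk _ _ _ _ _ hyp1 Cs (erefl Cs) D).
have [ex1 uniq1] := min_unique _ _ _ hlam H1.
split; first by exists Cs.
move=> Chat /uniq1 ->.
pose u k := app Cs (xd k).
have hu k : u k = \sum_(l < n) B l k *: phiW (w l).
  rewrite /u /Cs (app_sum rk app happ).
  under eq_bigr do rewrite hrk.
  rewrite /g; under eq_bigr do rewrite scaler_sumr.
  rewrite exchange_big; apply: eq_bigr => l _.
  rewrite /B mxE scaler_suml; apply: eq_bigr => j _.
  by rewrite scalerA hKd mulrC.
pose z k := tAW (phiA (ad k)) (u k).
have huw k l' : inner (u k) (u l') = (B^T *m KWW *m B) k l'.
  rewrite !hu inner_suml.
  under eq_bigr do rewrite innerZl inner_sumr.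
  rewrite [RHS]mxE.
  under [RHS]eq_bigr => j _ do rewrite mxE mulr_suml.
  rewrite [RHS]exchange_big; apply: eq_bigr => i _.
  rewrite mulr_sumr; apply: eq_bigr => j _.
  rewrite !mxE innerZr -kWi; ring.
have hM i j : M i j = inner (z i) (z j).
  by rewrite /M mxE /z tAWi -kAi huw mxE.
have Mcu : M + (m%:R * eta)%:M \in unitmx.
  apply: (@gram_unit R HAW m z (m%:R * eta) _ hM) => m0; by rewrite mulr_gt0 // ltr0n.
pose al k := alpha k 0.
have hyp2 k : yd k = \sum_(j < m) inner (z j) (z k) * al j + (m%:R * eta) * al k.
  have Ma : (M + (m%:R * eta)%:M) *m alpha = ydv.
    by rewrite /alpha mulmxA mulmxV // mul1mx.
  have := congr1 (fun Q : 'cV[R]_m => Q k 0) Ma.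
  rewrite /= mulmxDl mul_scalar_mx !mxE => <-.
  congr (_ + _); last by rewrite /al /alpha mxE.
  by apply: eq_bigr => j _; rewrite hM innerC.
pose hs := \sum_(j < m) al j *: z j.
have H2 : forall d, obj2 Cs hs + eta * nsq d <= obj2 Cs (hs + d).
  move=> d; exact (@stage2 _ _ m z yd al eta hyp2 hs (erefl hs) d).
have [ex2 uniq2] := min_unique _ _ _ heta H2.
split; first by exists hs.
move=> hhat /uniq2 -> a0 w0.
rewrite /hs inner_suml [RHS]mxE; apply: eq_bigr => j _.
rewrite innerZl /z tAWi -kAi hu inner_suml !mxE.
rewrite /al /alpha mxE; congr (_ * (_ * _)).
by apply: eq_bigr => i _; rewrite innerZl -kWi !mxE.
Qed.
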